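(* For every $\delta>0$ there exists $\eta>0$ such that the following holds. Let $G$ be an abelian group, $H$ a finite subgroup of $G$, and $T \subset G\setminus H$ a non-empty finite subset disjoint from $H$ with $|T|/|H| < \eta$. Then \[\left|\epsilon^*(H\cup T) - \frac{2|T|}{|H|}\right| \le \delta\,\frac{|T|}{|H|}.\] That is, the smallest $\epsilon$ for which $H\cup T$ is a distributional $\epsilon$-approximate group equals $2|T|/|H| + o(|T|/|H|)$ as $|T|/|H| \to 0$.
   Context: For a non-empty finite subset $A$ of an abelian group $G$, define $\epsilon^*(A) = 1 - \max_{U \subset G,\, |U|=|A|} \frac{|\{(a,b)\in A\times A : a+b \in U\}|}{|A|^2}$. Thus $A$ is a distributional $\epsilon$-approximate group (i.e. there exists $U\subset G$ with $|U|=|A|$ such that the proportion of pairs $(a,b)\in A\times A$ with $a+b\in U$ is at least $1-\epsilon$) if and only if $\epsilon \ge \epsilon^*(A)$. *)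

(* Defs.v *)
From HB Require Import structures.
From mathcomp Require Import all_boot all_order all_algebra.
From mathcomp Require Import finmap.
From mathcomp Require Import boolp reals.
Set Implicit Arguments. Unset Strict Implicit. Unset Printing Implicit Defensive.
Import Order.TTheory GRing.Theory Num.Theory.
Local Open Scope fset_scope.
Local Open Scope ring_scope.

Local Open Scope nat_scope.
Definition pair_count (G : zmodType) (A U : {fset G}) : nat :=
  \sum_(a <- A) \sum_(b <- A) nat_of_bool ((a + b)%R \in U).

(* max over U subset of G with |U| = |A| of pair_count A U
   (the attained values lie in [0, |A|^2], and U := A is admissible) *)
Definition max_pair_count (G : zmodType) (A : {fset G}) : nat :=
  (\max_(k < (#|` A| ^ 2).+1 |
      `[< exists U : {fset G}, #|` U| = #|` A| /\ pair_count A U = k >]) k)%N.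

Local Open Scope ring_scope.
Definition eps_star (R : realType) (G : zmodType) (A : {fset G}) : R :=
  1 - (max_pair_count A)%:R / ((#|` A| ^ 2)%N)%:R.

Definition is_subgroup (G : zmodType) (H : {fset G}) : Prop :=
  0 \in H /\ forall x y, x \in H -> y \in H -> x - y \in H.

(* Main.v *)
Require Import Defs.
From HB Require Import structures.
From mathcomp Require Import all_boot all_order all_algebra.
From mathcomp Require Import finmap.
From mathcomp Require Import boolp reals.
From mathcomp Require Import ring lra zify.
Import Order.TTheory GRing.Theory Num.Theory.
Local Open Scope fset_scope.
Section Aux.
Local Open Scope nat_scope.

Lemma sum_const_seq (K : Type) (s : seq K) c : \sum_(a <- s) c = size s * c.
Proof. elim: s => [|x s IH]; rewrite ?big_nil ?big_cons ?IH //= mulSn. Qed.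

Lemma leq_sum_seq (K : eqType) (s : seq K) (F1 F2 : K -> nat) :
  (forall x, x \in s -> F1 x <= F2 x) ->
  \sum_(x <- s) F1 x <= \sum_(x <- s) F2 x.
Proof.
elim: s => [|x s IH] h; rewrite ?big_nil ?big_cons // leq_add //.
  by apply: h; rewrite mem_head.
by apply: IH => y ys; apply: h; rewrite inE ys orbT.
Qed.

Lemma sum_count (K : Type) (s : seq K) (P : pred K) :
  \sum_(a <- s) nat_of_bool (P a) = count P s.
Proof. by elim: s => [|x s IH]; rewrite ?big_nil ?big_cons ?IH. Qed.

Lemma count_inj (K : eqType) (s S U : seq K) (f : K -> K) :
  uniq s -> injective f -> (forall a, a \in s -> f a \in U -> f a \in S) ->
  \sum_(a <- s) nat_of_bool (f a \in U) <= size S.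
Proof.
move=> us injf hS; rewrite sum_count -size_filter.
rewrite -(size_map f); apply: uniq_leq_size.
  by rewrite map_inj_uniq // filter_uniq.
move=> y /mapP [a]; rewrite mem_filter => /andP [h1 h2] ->.
exact: hS.
Qed.

Lemma sum_fsetU (K : choiceType) (H T : {fset K}) (F : K -> nat) :
  (forall t, t \in T -> t \notin H) ->
  \sum_(a <- H `|` T) F a = \sum_(a <- H) F a + \sum_(a <- T) F a.
Proof.
move=> dis; rewrite -big_cat; apply: perm_big; apply: uniq_perm.
- exact: fset_uniq.
- rewrite cat_uniq !fset_uniq /= andbT; apply/hasPn => x xT /=; exact: dis.
- by move=> x; rewrite mem_cat in_fsetU.
Qed.

Variable G : zmodType.

Lemma subg_add (H : {fset G}) x y : is_subgroup H -> x \in H -> y \in H -> (x + y)%R \in H.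
Proof.
move=> [h0 hs] xH yH; have := hs x (0 - y)%R xH (hs _ _ h0 yH).
by rewrite sub0r opprK.
Qed.

Lemma notin_add (H : {fset G}) a b : is_subgroup H -> a \in H -> b \notin H ->
  (a + b)%R \notin H /\ (b + a)%R \notin H.
Proof.
move=> [h0 hs] aH bH; split; apply/negP => h.
  by have := hs _ _ h aH; rewrite addrC addKr (negbTE bH).
by have := hs _ _ h aH; rewrite addrK (negbTE bH).
Qed.

Lemma pair_upper (H T U : {fset G}) : is_subgroup H ->
  (forall t, t \in T -> t \notin H) ->
  #|` U| = #|` H| + #|` T| -> 2 * #|` T| <= #|` H| ->
  pair_count (H `|` T) U <= #|` H| * #|` H| + 3 * (#|` T| * #|` T|).
Proof.
move=> sg dis hU h2; rewrite /pair_count sum_fsetU //.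
under eq_bigr do rewrite sum_fsetU //.
under [X in _ + X <= _]eq_bigr do rewrite sum_fsetU //.
rewrite !big_split /=.
set p := #|` U `&` H|; set q := #|` U `\` H|.
have pq : p + q = #|` U| by rewrite cardfsID.
have pn : p <= #|` H| by apply: fsubset_leq_card; apply: fsubsetIr.
have S1 : \sum_(a <- H) \sum_(b <- H) nat_of_bool ((a + b)%R \in U) <= #|` H| * p.
  rewrite -sum_const_seq; apply: leq_sum_seq => a aH.
  apply: count_inj; [exact: fset_uniq | exact: addrI |].
  by move=> b bH abU; rewrite in_fsetI abU subg_add.
have S2 : \sum_(a <- H) \sum_(b <- T) nat_of_bool ((a + b)%R \in U) <= #|` T| * q.
  rewrite exchange_big /= -sum_const_seq; apply: leq_sum_seq => b bT.
  apply: count_inj; [exact: fset_uniq | exact: addIr |].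
  move=> a aH abU; rewrite in_fsetD abU andbT.
  by case: (@notin_add H a b sg aH (dis _ bT)).
have S3 : \sum_(a <- T) \sum_(b <- H) nat_of_bool ((a + b)%R \in U) <= #|` T| * q.
  rewrite -sum_const_seq; apply: leq_sum_seq => a aT.
  apply: count_inj; [exact: fset_uniq | exact: addrI |].
  move=> b bH abU; rewrite in_fsetD abU andbT.
  by case: (@notin_add H b a sg bH (dis _ aT)).
have S4 : \sum_(a <- T) \sum_(b <- T) nat_of_bool ((a + b)%R \in U) <= #|` T| * #|` T|.
  rewrite -sum_const_seq; apply: leq_sum_seq => a aT.
  rewrite -[X in _ <= X]muln1 -sum_const_seq; apply: leq_sum_seq => b _.
  exact: leq_b1.
have key : #|` H| * p + 2 * (#|` T| * q) <= #|` H| * #|` H| + 2 * (#|` T| * #|` T|).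
  have [d hd] : exists d, #|` H| = p + d by exists (#|` H| - p); rewrite subnKC.
  have hq : q = #|` T| + d by move: pq; rewrite hU hd; lia.
  have h3 : 2 * #|` T| * d <= (p + d) * d by rewrite -hd leq_mul2r h2 orbT.
  rewrite hd hq; nia.
apply: leq_trans (leq_add (leq_add S1 S2) (leq_add S3 S4)) _. move: key; clear. move: (#|` H|) (#|` T|) p q => n t p q. lia.
Qed.

Lemma pair_lower (H T : {fset G}) : is_subgroup H ->
  (forall t, t \in T -> t \notin H) ->
  #|` H| * #|` H| <= pair_count (H `|` T) (H `|` T).
Proof.
move=> sg dis; rewrite /pair_count sum_fsetU //.
apply: leq_trans (leq_addr _ _).
rewrite -sum_const_seq; apply: leq_sum_seq => a aH.
rewrite sum_fsetU //; apply: leq_trans (leq_addr _ _).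
rewrite -[X in X <= _]muln1 -sum_const_seq; apply: leq_sum_seq => b bH.
by rewrite in_fsetU subg_add.
Qed.

Lemma pair_le (A U : {fset G}) : pair_count A U <= #|` A| ^ 2.
Proof.
rewrite /pair_count -mulnn -sum_const_seq; apply: leq_sum_seq => a _.
rewrite -[X in _ <= X]muln1 -sum_const_seq; apply: leq_sum_seq => b _.
exact: leq_b1.
Qed.

Lemma max_bounds (H T : {fset G}) : is_subgroup H ->
  (forall t, t \in T -> t \notin H) -> 2 * #|` T| <= #|` H| ->
  #|` H| * #|` H| <= max_pair_count (H `|` T) <= #|` H| * #|` H| + 3 * (#|` T| * #|` T|).
Proof.
move=> sg dis h2.
have cA : #|` H `|` T| = #|` H| + #|` T|.
  have := cardfsUI H T.
  rewrite (_ : H `&` T = fset0) ?cardfs0 ?addn0 //.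
  apply/fsetP => x; rewrite in_fsetI in_fset0.
  by case xT: (x \in T); rewrite ?andbF // (negbTE (dis _ xT)).
apply/andP; split.
  have hk : pair_count (H `|` T) (H `|` T) < (#|` H `|` T| ^ 2).+1 by rewrite ltnS pair_le.
  apply: leq_trans (pair_lower H T sg dis) _.
  apply: (leq_trans _ (@leq_bigmax_cond _ _ (fun k => nat_of_ord k) (Ordinal hk) _)) => //=.
  by apply/asboolP; exists (H `|` T).
apply/bigmax_leqP => k /asboolP [U [hU <-]].
by apply: pair_upper => //; rewrite hU cA.
Qed.

End Aux.

Section RealPart.
Local Open Scope ring_scope.
Lemma real_part (R : realType) (delta N x Mr : R) : 0 < N -> 0 <= x ->
  x < delta/8 -> x < 1/2 -> N*N <= Mr -> Mr <= N*N + 3*((x*N)*(x*N)) ->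
  `|1 - Mr/((N + x*N)^+2) - 2*x| <= delta*x.
Proof.
move=> N0 x0 xd x2 hM1 hM2.
set y := Mr / _.
have NN : 0 < N * N by apply: mulr_gt0.
have X0 : 0 < (1 + x)^+2 by apply: exprn_gt0; lra.
have D : (N + x*N)^+2 = (N*N)*((1+x)^+2) by ring.
have hy : y * (N*N*(1+x)^+2) = Mr.
  by rewrite /y -D divfK // D; apply: lt0r_neq0; apply: mulr_gt0.
have e : N*N*(y*(1+x)^+2) = Mr by rewrite -hy; ring.
have h1 : 1 <= y*(1+x)^+2.
  by rewrite -(ler_pM2l NN) mulr1 e.
have h2 : y*(1+x)^+2 <= 1 + 3*(x*x).
  by rewrite -(ler_pM2l NN) e; move: hM2; rewrite (_ : N * N * (1 + 3 * (x * x)) = N*N + 3*((x*N)*(x*N))) //; ring.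
have p1 : (1 - 2*x)*(1+x)^+2 <= 1.
  have : 0 <= x*x*(3 + 2*x) by apply: mulr_ge0; [apply: mulr_ge0|lra].
  move=> h; have -> : (1 - 2*x)*(1+x)^+2 = 1 - x*x*(3+2*x) by ring.
  lra.
have p2 : 1 + 3*(x*x) <= (1 - 2*x + delta*x)*(1+x)^+2.
  have hd : 8*x <= delta by lra.
  have q1 : 8*x*(x*(1+x)^+2) <= delta*(x*(1+x)^+2).
    by apply: ler_wpM2r => //; apply: mulr_ge0 => //; apply: ltW.
  have q2 : 0 <= x*x*x*(2 + 16 * x + 8 * x * x) by apply: mulr_ge0; [apply: mulr_ge0; [apply: mulr_ge0|]|]; nra.
  have -> : (1 - 2*x + delta*x)*(1+x)^+2 = (1 - 2*x)*(1+x)^+2 + delta*(x*(1+x)^+2) by ring.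
  have e1 : (1 - 2*x)*(1+x)^+2 = 1 - 3*(x*x) - 2*(x*x*x) by ring.
  have e2 : 8*x*(x*(1+x)^+2) = 8*(x*x) + x*x*x*(16 + 8 * x) by ring.
  nra.
rewrite ler_norml; apply/andP; split.
  have : y <= 1 - 2*x + delta*x.
    by rewrite -(ler_pM2r X0); apply: le_trans h2 p2.
  lra.
have : 1 - 2*x <= y by rewrite -(ler_pM2r X0); apply: le_trans p1 h1.
have : 0 <= delta * x by apply: mulr_ge0 => //; lra.
lra.
Qed.
End RealPart.
Local Open Scope ring_scope.

Theorem mainTheorem6 (R : realType) (delta : R) (hdelta : 0 < delta) :
  exists eta : R, 0 < eta /\
    forall (G : zmodType) (H T : {fset G}),
      is_subgroup H ->
      T != fset0 ->
      (forall t, t \in T -> t \notin H) ->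
      (#|` T|%:R / #|` H|%:R : R) < eta ->
      `| eps_star R (H `|` T) - 2 * (#|` T|%:R / #|` H|%:R) |
        <= delta * (#|` T|%:R / #|` H|%:R).
Proof.
exists (Num.min (delta/8) (1/2)); split.
  by rewrite lt_min; apply/andP; split; lra.
move=> G H T sg Tn0 dis; rewrite lt_min => /andP [hx1 hx2].
have n0 : (0 < #|` H|)%N.
  rewrite cardfs_gt0; apply/negP => /eqP H0.
  by case: sg; rewrite H0 in_fset0.
have N0 : 0 < (#|` H|%:R : R) by rewrite ltr0n.
have eT : (#|` T|%:R : R) = (#|` T|%:R / #|` H|%:R) * #|` H|%:R.
  by rewrite divfK // lt0r_neq0.
have h2 : (2 * #|` T| <= #|` H|)%N.
  have : ((2 * #|` T|)%N%:R : R) < #|` H|%:R.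
    rewrite natrM eT; move: hx2 N0; set x := (_ / _); set N := _%:R; nra.
  by rewrite ltr_nat => /ltnW.
have /andP [hb1 hb2] := max_bounds G H T sg dis h2.
have cA : #|` H `|` T| = (#|` H| + #|` T|)%N.
  have := cardfsUI H T.
  rewrite (_ : H `&` T = fset0) ?cardfs0 ?addn0 //.
  apply/fsetP => x; rewrite in_fsetI in_fset0.
  by case xT: (x \in T); rewrite ?andbF // (negbTE (dis _ xT)).
rewrite /eps_star cA natrX natrD [X in (_ + X)^+2]eT.
apply: real_part => //.
- by apply: divr_ge0.
- by rewrite -natrM ler_nat.
- by rewrite -eT -!natrM -natrD ler_nat.
Qed.
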